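(* Let $\rho\le\frac{1}{100}$ be a sufficiently small constant. For (sufficiently large) $n$, there is no algorithm which, given the outcomes of the experiments $Q(a,b,c)$ on all $\binom{n}{3}$ triples of leaves generated according to the homogeneous noise model, reconstructs the topology of every rooted edge-weighted full binary tree $T$ with $n$ leaves, all root-to-leaf paths of weight $1$, and all edge weights at least $\frac{\rho}{\sqrt{n}}$. More precisely, there are two such trees with distinct topologies whose joint distributions of the outcomes of all $\binom{n}{3}$ experiments have total variation distance at most $0.01$, so no algorithm can distinguish them with probability more than $0.51$. Since the homogeneous model is an instance of the general noise model, the same impossibility holds for the general noise model.
   Context: Let $d$ be the weighted path distance between leaves of $T$ (an ultrametric). For every unordered triple of distinct leaves $\{a,b,c\}$ a single experiment $Q(a,b,c)$ is performed, returning one of the pairs $(a,b)$, $(b,c)$, $(a,c)$; outcomes on distinct triples are mutually independent. Homogeneous noise model: $\Pr[Q(a,b,c)=(a,b)]=\frac{d(a,c)+d(b,c)}{2(d(a,b)+d(b,c)+d(a,c))}$, symmetrically for the other pairs. General noise model: for a triple with closest-pair distance $d_1$ and other distance $d_2\ge d_1$, the closest pair is returned with probability $p_{\mathrm{correct}}(d_1,d_2)$ and each other pair with probability $p_{\mathrm{incorrect}}(d_1,d_2)$, where $p_{\mathrm{correct}}+2p_{\mathrm{incorrect}}=1$, $p_{\mathrm{correct}}>p_{\mathrm{incorrect}}$, and $\partial p_{\mathrm{correct}}/\partial d_1\le-\varepsilon$ for $0<d_1<d_2$ for some constant $\varepsilon>0$. The topology of $T$ is the underlying rooted unweighted tree with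 labelled leaves. *)

(* Defs.v *)
From HB Require Import structures.
From mathcomp Require Import all_boot all_order all_algebra.
From mathcomp Require Import reals.
Set Implicit Arguments. Unset Strict Implicit. Unset Printing Implicit Defensive.
Import Order.TTheory GRing.Theory Num.Theory.
Local Open Scope ring_scope.

(* Rooted edge-weighted full binary trees with leaves labelled by nats.
   [Node wl l wr r] : an internal node with exactly two children [l] and [r];
   [wl] (resp. [wr]) is the weight of the edge to [l] (resp. [r]). *)
Inductive wtree (R : Type) : Type :=
  | Leaf of nat
  | Node of R & wtree R & R & wtree R.
Arguments Leaf {R}.

Section Trees.
Variable R : realType.

Fixpoint leaves (t : wtree R) : seq nat :=
  match t with
  | Leaf i => [:: i]
  | Node _ l _ r => leaves l ++ leaves r
  end.

Fixpoint depth (t : wtree R) (a : nat) : R :=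
  match t with
  | Leaf _ => 0
  | Node wl l wr r => if a \in leaves l then wl + depth l a else wr + depth r a
  end.

Fixpoint dist (t : wtree R) (a b : nat) : R :=
  match t with
  | Leaf _ => 0
  | Node wl l wr r =>
      if (a \in leaves l) && (b \in leaves l) then dist l a b
      else if (a \in leaves r) && (b \in leaves r) then dist r a b
      else depth t a + depth t b
  end.

Fixpoint weights_ge (t : wtree R) (c : R) : Prop :=
  match t with
  | Leaf _ => True
  | Node wl l wr r => [/\ c <= wl, c <= wr, weights_ge l c & weights_ge r c]
  end.

Definition admissible (n : nat) (rho : R) (t : wtree R) : Prop :=
  [/\ perm_eq (leaves t) (iota 0 n),
      weights_ge t (rho / Num.sqrt (n%:R))
    & forall a, a \in leaves t -> depth t a = 1].

Fixpoint same_topo (t1 t2 : wtree R) : Prop :=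
  match t1, t2 with
  | Leaf i, Leaf j => i = j
  | Node _ l1 _ r1, Node _ l2 _ r2 =>
      (same_topo l1 l2 /\ same_topo r1 r2) \/ (same_topo l1 r2 /\ same_topo r1 l2)
  | _, _ => False
  end.

(* unordered triples of distinct leaves, represented as a < b < c *)
Definition triple (n : nat) := {x : 'I_n * 'I_n * 'I_n | (x.1.1 < x.1.2 < x.2)%N}.

(* outcomes of all experiments: for each triple (a,b,c), 0 stands for the
   pair (a,b), 1 for (b,c), 2 for (a,c) *)
Definition outcome (n : nat) := {ffun triple n -> 'I_3}.

(* homogeneous noise model: probability that Q(a,b,c) returns pair k *)
Definition qprob (t : wtree R) (n : nat) (x : triple n) (k : 'I_3) : R :=
  let a := nat_of_ord (val x).1.1 in
  let b := nat_of_ord (val x).1.2 in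
  let c := nat_of_ord (val x).2 in
  let S := dist t a b + dist t b c + dist t a c in
  if val k == 0%N then (dist t a c + dist t b c) / (2 * S)
  else if val k == 1%N then (dist t a b + dist t a c) / (2 * S)
  else (dist t a b + dist t b c) / (2 * S).

Definition joint (t : wtree R) (n : nat) (w : outcome n) : R :=
  \prod_(x : triple n) qprob t x (w x).

Definition tv (n : nat) (t1 t2 : wtree R) : R :=
  2^-1 * \sum_(w : outcome n) `|joint t1 w - joint t2 w|.

Definition prob_answer (n : nat) (t : wtree R) (f : outcome n -> bool) (b : bool) : R :=
  \sum_(w : outcome n | f w == b) joint t w.

End Trees.

(* Main.v *)
Require Import Defs.
From HB Require Import structures.
From mathcomp Require Import all_boot all_order all_algebra.
From mathcomp Require Import reals.
From mathcomp Require Import zify ring lra.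
Set Implicit Arguments. Unset Strict Implicit. Unset Printing Implicit Defensive.
Import Order.TTheory GRing.Theory Num.Theory.
Local Open Scope ring_scope.


Definition bedge (R : realType) (c : R) (m : nat) (H : R) : R :=
  if (m <= 1)%N then H else c.

Fixpoint bal (R : realType) (c : R) (k s m : nat) (H : R) : wtree R :=
  match k with
  | 0%N => Leaf s
  | k'.+1 => if (m <= 1)%N then Leaf s else
      Node (bedge c m./2 H) (bal c k' s m./2 (H - bedge c m./2 H))
           (bedge c (m - m./2) H) (bal c k' (s + m./2) (m - m./2) (H - bedge c (m - m./2) H))
  end.

Lemma bal_small (R : realType) (c : R) k s m H : (m <= 1)%N -> bal c k s m H = Leaf s.
Proof. by case: k => [|k] //= ->. Qed.

Lemma half_bounds m k : (2 <= m)%N -> (m <= 2 ^ k.+1)%N ->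
  [/\ (1 <= m./2)%N, (m./2 <= 2 ^ k)%N, (1 <= m - m./2)%N, (m - m./2 <= 2 ^ k)%N
   & (m./2 + (m - m./2) = m)%N].
Proof. rewrite expnS -!divn2; set P := (2 ^ k)%N. move=> *. split; lia. Qed.

Lemma leaves_bal (R : realType) (c : R) k s m H : (1 <= m <= 2 ^ k)%N ->
  leaves (bal c k s m H) = iota s m.
Proof.
elim: k s m H => [|k IH] s m H /andP[m1 mk].
  by have -> : m = 1%N by rewrite expn0 in mk; lia.
rewrite /=; case: ifP => m2; first by have -> : m = 1%N by lia.
have [h1 h2 h3 h4 h5] := half_bounds (m := m) (k := k) (ltac:(lia)) mk.
rewrite /= IH ?h1 ?h2 // IH ?h3 ?h4 // -iotaD h5 //.
Qed.

Lemma depth_bal (R : realType) (c : R) k s m H : (2 <= m <= 2 ^ k)%N ->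
  forall a, depth (bal c k s m H) a = H.
Proof.
elim: k s m H => [|k IH] s m H /andP[m1 mk] a.
  by rewrite expn0 in mk; lia.
rewrite /=; case: ifP => m2; first lia.
have [h1 h2 h3 h4 h5] := half_bounds (m := m) (k := k) (ltac:(lia)) mk.
have sub : forall m', (1 <= m' <= 2 ^ k)%N -> forall s' a',
    bedge c m' H + depth (bal c k s' m' (H - bedge c m' H)) a' = H.
  move=> m' /andP[m'1 m'k] s' a'; rewrite /bedge; case: ifP => m'2.
    rewrite bal_small //=; lra.
  by rewrite IH ?m'k ?andbT; [rewrite addrC subrK | lia].
by rewrite /=; case: ifP => _; apply: sub; rewrite ?h1 ?h2 ?h3 ?h4.
Qed.

Lemma weights_bal (R : realType) (c : R) k s m H : 0 <= c -> k%:R * c <= H ->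
  (m <= 2 ^ k)%N -> weights_ge (bal c k s m H) c.
Proof.
elim: k s m H => [|k IH] s m H c0 kc mk //=.
case: ifP => m2 //.
have [h1 h2 h3 h4 h5] := half_bounds (m := m) (k := k) (ltac:(lia)) mk.
have cH : c <= H by apply: le_trans kc; rewrite -[X in X <= _]mul1r ler_wpM2r // ler1n.
have sub : forall m', (m' <= 2 ^ k)%N -> forall s',
    c <= bedge c m' H /\ weights_ge (bal c k s' m' (H - bedge c m' H)) c.
  move=> m' m'k s'; rewrite /bedge; case: ifP => m'2.
    by rewrite bal_small.
  split => //; apply: IH => //.
  by rewrite lerBrDl; move: kc; rewrite -natr1 mulrDl mul1r addrC.
have [e1 w1] := sub _ h2 s; have [e2 w2] := sub _ h4 (s + m./2)%N.
by split.
Qed.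


Definition Sp (R : realType) (c : R) (i j : nat) : wtree R :=
  Node c (Node (2^-1 - c) (Leaf 0) (2^-1 - c) (Leaf i)) 2^-1 (Leaf j).

Lemma leaves_Sp (R : realType) (c : R) i j : leaves (Sp c i j) = [:: 0%N; i; j].
Proof. by []. Qed.
Arguments Sp : simpl never.

Definition Tr (R : realType) (c : R) (k n i j : nat) : wtree R :=
  Node 2^-1 (bal c k 3 (n - 3) 2^-1) 2^-1 (Sp c i j).

Lemma same_topo_perm (R : realType) (t1 t2 : wtree R) :
  same_topo t1 t2 -> perm_eq (leaves t1) (leaves t2).
Proof.
elim: t1 t2 => [i|w1 l1 IHl w2 r1 IHr] [j|w1' l2 w2' r2] //=.
  by move=> ->.
case=> [[h1 h2]|[h1 h2]]; first by rewrite perm_cat ?IHl ?IHr.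
by rewrite perm_catC perm_cat ?IHl ?IHr.
Qed.

Lemma bal_ge (R : realType) (c : R) k s m H a :
  a \in leaves (bal c k s m H) -> (s <= a)%N.
Proof.
elim: k s m H => [|k IH] s m H /=; first by rewrite inE => /eqP->.
case: ifP => _ /=; first by rewrite inE => /eqP->.
rewrite mem_cat => /orP[/IH //|/IH]; lia.
Qed.

Lemma Tr_notsame (R : realType) (c : R) k n :
  ~ same_topo (Tr c k n 1 2) (Tr c k n 2 1).
Proof.
case=> [[_ HH]|[_ H]].
  move: HH => /=.
  by case=> [[_ //]|[]].
have := perm_mem (@same_topo_perm R (Sp c 1 2) (bal c k 3 (n-3) 2^-1) H) 0%N; rewrite /Sp; rewrite /= inE eqxx /=.
by case: (boolP (0%N \in _)) => // /bal_ge.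
Qed.

Lemma Tr_adm (R : realType) (c : R) k n i j : (5 <= n)%N -> (n - 3 <= 2 ^ k)%N ->
  0 <= c -> 4 * c <= 1 -> k%:R * c <= 2^-1 -> perm_eq [:: 0%N; i; j] [:: 0%N; 1%N; 2%N] ->
  [/\ perm_eq (leaves (Tr c k n i j)) (iota 0 n), weights_ge (Tr c k n i j) c
    & forall a, depth (Tr c k n i j) a = 1].
Proof.
move=> n5 nk c0 c4 kc pij; split.
- rewrite /Tr /= ?leaves_Sp leaves_bal; last by apply/andP; split=> //; lia.
  have -> : n = (3 + (n - 3))%N by lia.
  rewrite iotaD perm_catC addnC subnK; last by lia.
  by rewrite perm_cat2r.
- split; try lra.
    by apply: weights_bal.
  rewrite /Sp /=; split=> //; try lra; split=> //; lra.
- move=> a /=; case: ifP => _.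
    rewrite depth_bal; first lra.
    apply/andP; split=> //; lia.
  rewrite /Sp /=; case: ifP => _; first case: ifP => _; lra.
Qed.

Lemma dist_Node (R : realType) wl (l : wtree R) wr r a b :
  dist (Node wl l wr r) a b =
  if (a \in leaves l) && (b \in leaves l) then dist l a b
  else if (a \in leaves r) && (b \in leaves r) then dist r a b
  else depth (Node wl l wr r) a + depth (Node wl l wr r) b.
Proof. by []. Qed.

Lemma depth_Node (R : realType) wl (l : wtree R) wr r a :
  depth (Node wl l wr r) a = if a \in leaves l then wl + depth l a else wr + depth r a.
Proof. by []. Qed.

Lemma depth_Sp (R : realType) (c : R) i j u : depth (Sp c i j) u = 2^-1.
Proof. rewrite /Sp /=; case: ifP => _; first case: ifP => _; ring. Qed.

Lemma bal_notin (R : realType) (c : R) k m H u : (u < 3)%N ->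
  (u \in leaves (bal c k 3 m H)) = false.
Proof. by move=> u3; apply/negbTE/negP => /bal_ge; lia. Qed.

Lemma dist_cross (R : realType) (c : R) k n i j u z :
  (u < 3)%N -> (3 <= z)%N -> (i < 3)%N -> (j < 3)%N -> (2 <= n - 3 <= 2 ^ k)%N ->
  dist (Tr c k n i j) u z = 2.
Proof.
move=> u3 z3 i3 j3 nk; rewrite /Tr dist_Node !depth_Node leaves_Sp bal_notin //.
have -> : (z \in [:: 0%N; i; j]) = false by rewrite !inE; apply/negbTE; lia.
rewrite andbF /= depth_bal //; repeat case: ifP => _; rewrite /=; lra.
Qed.

Lemma dist_in (R : realType) (c : R) k n i j u v :
  (u < 3)%N -> (v < 3)%N -> (i < 3)%N -> (j < 3)%N -> u \in [:: 0%N; i; j] -> v \in [:: 0%N; i; j] ->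
  dist (Tr c k n i j) u v = dist (Sp c i j) u v.
Proof. by move=> u3 v3 i3 j3 hu hv; rewrite /Tr dist_Node leaves_Sp bal_notin // hu hv. Qed.

Lemma dist_bulk (R : realType) (c : R) k n i j u v :
  (3 <= u)%N -> (3 <= v)%N -> (u < n)%N -> (v < n)%N -> (1 <= n - 3 <= 2 ^ k)%N ->
  dist (Tr c k n i j) u v = dist (bal c k 3 (n - 3) 2^-1) u v.
Proof.
move=> u3 v3 un vn nk; rewrite /Tr dist_Node leaves_bal //.
have -> : (u \in iota 3 (n - 3)) = true by rewrite mem_iota; apply/andP; split; lia.
by have -> : (v \in iota 3 (n - 3)) = true by rewrite mem_iota; apply/andP; split; lia.
Qed.

Lemma dist_Sp1 (R : realType) (c : R) :
  [/\ dist (Sp c 1 2) 0 1 = 1 - 2 * c, dist (Sp c 1 2) 0 2 = 1 & dist (Sp c 1 2) 1 2 = 1].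
Proof. rewrite /Sp /=; split; lra. Qed.

Lemma dist_Sp2 (R : realType) (c : R) :
  [/\ dist (Sp c 2 1) 0 1 = 1, dist (Sp c 2 1) 0 2 = 1 - 2 * c & dist (Sp c 2 1) 1 2 = 1].
Proof. rewrite /Sp /=; split; lra. Qed.

Lemma pairT_eq (R : realType) (c : R) k n u v : (2 <= n - 3 <= 2 ^ k)%N ->
  (u < v)%N -> (v < n)%N -> ~~ ((u == 0%N) && (v \in [:: 1%N; 2%N])) ->
  dist (Tr c k n 1 2) u v = dist (Tr c k n 2 1) u v.
Proof.
move=> hk uv vn huv.
have hk1 : (1 <= n - 3 <= 2 ^ k)%N by lia.
case: (leqP 3 u) => u3.
  by rewrite !dist_bulk //; lia.
case: (leqP 3 v) => v3.
  by rewrite !dist_cross.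
have [-> ->] : u = 1%N /\ v = 2%N.
  move: huv; rewrite !inE; case: (u =P 0%N) => [->|]; rewrite ?eqxx /=.
    by case: (v =P 1%N) => [->//|]; case: (v =P 2%N) => [->//|]; lia.
  lia.
have [_ _ h1] := dist_Sp1 c; have [_ _ h2] := dist_Sp2 c.
by rewrite !dist_in // ?h1 ?h2.
Qed.


Lemma sum_prod (R : realType) (I J : finType) (p : I -> J -> R) :
  \sum_(w : {ffun I -> J}) \prod_i p i (w i) = \prod_i \sum_j p i j.
Proof. by rewrite bigA_distr_bigA. Qed.

Lemma pt_bound (R : realType) (a Q : R) : 0 < Q ->
  `|a| <= 50 * a ^+ 2 / Q + Q / 200.
Proof.
move=> Q0.
have h : `|a| * Q <= 50 * a ^+ 2 + Q ^+ 2 / 200.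
  rewrite -real_normK ?num_real //.
  set b := `|a|; have := sqr_ge0 (b - Q / 100); nra.
have -> : 50 * a ^+ 2 / Q + Q / 200 = (50 * a ^+ 2 + Q ^+ 2 / 200) / Q.
  by field; rewrite gt_eqF.
by rewrite ler_pdivlMr.
Qed.

Lemma prod_bound (R : realType) (I : Type) (r : seq I) (e : I -> R) :
  (forall i, 0 <= e i) -> \sum_(i <- r) e i <= 2^-1 ->
  \prod_(i <- r) (1 + e i) <= 1 + 2 * \sum_(i <- r) e i.
Proof.
move=> e0; elim: r => [|x r IH]; first by rewrite !big_nil; lra.
rewrite !big_cons => hs.
have hr : \sum_(i <- r) e i <= 2^-1 by have := e0 x; lra.
have p0 : 0 <= \prod_(i <- r) (1 + e i).
  by apply: prodr_ge0 => i _; have := e0 i; lra.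
have IH' := IH hr; have ex := e0 x.
have h1 : 0 <= (1 + e x) * (1 + 2 * \sum_(i <- r) e i - \prod_(i <- r) (1 + e i)).
  by apply: mulr_ge0; lra.
have h2 : 0 <= e x * (2^-1 - \sum_(i <- r) e i) by apply: mulr_ge0; lra.
nra.
Qed.

Lemma chi_identity (R : realType) (J : finType) (p q : J -> R) :
  (forall j, 0 < q j) -> \sum_j p j = 1 -> \sum_j q j = 1 ->
  \sum_j p j ^+ 2 / q j = 1 + \sum_j (p j - q j) ^+ 2 / q j.
Proof.
move=> q0 sp sq.
have : \sum_j (p j - q j) ^+ 2 / q j = \sum_j (p j ^+ 2 / q j - 2 * p j + q j).
  apply: eq_bigr => j _; field; by rewrite gt_eqF.
rewrite !big_split /= sumrN -big_distrr /= sp sq => ->; ring.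
Qed.

Lemma L1_main (R : realType) (I J : finType) (p q : I -> J -> R) (s : R) :
  (forall i j, 0 < q i j) -> (forall i, \sum_j p i j = 1) -> (forall i, \sum_j q i j = 1) ->
  \sum_i \sum_j (p i j - q i j) ^+ 2 / q i j <= s -> s <= 2^-1 ->
  \sum_(w : {ffun I -> J}) `|\prod_i p i (w i) - \prod_i q i (w i)| <= 100 * s + 1 / 200.
Proof.
move=> q0 sp sq hs s2.
set P := fun w : {ffun I -> J} => \prod_i p i (w i).
set Q := fun w : {ffun I -> J} => \prod_i q i (w i).
have Q0 : forall w, 0 < Q w by move=> w; apply: prodr_gt0.
have sP : \sum_w P w = 1.
  by rewrite /P sum_prod (eq_bigr (fun=> 1)) ?big1_eq.
have sQ : \sum_w Q w = 1.
  by rewrite /Q sum_prod (eq_bigr (fun=> 1)) ?big1_eq.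
have e0 : forall i, 0 <= \sum_j (p i j - q i j) ^+ 2 / q i j.
  move=> i; apply: sumr_ge0 => j _; apply: divr_ge0; [exact: sqr_ge0 | exact: ltW].
have chi : \sum_w P w ^+ 2 / Q w <= 1 + 2 * s.
  have -> : \sum_w P w ^+ 2 / Q w = \prod_i \sum_j p i j ^+ 2 / q i j.
    rewrite -sum_prod; apply: eq_bigr => w _.
    by rewrite /P /Q -prodrXl -prodfV -big_split.
  rewrite (eq_bigr (fun i => 1 + \sum_j (p i j - q i j) ^+ 2 / q i j)); last first.
    by move=> i _; apply: chi_identity.
  apply: le_trans (prod_bound e0 _) _.
    exact: le_trans hs s2.
  by rewrite lerD2l ler_pM2l // ?ltr0n.
have chi2 := chi_identity Q0 sP sQ.
apply: le_trans (_ : \sum_w (50 * (P w - Q w) ^+ 2 / Q w + Q w / 200) <= _).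
  by apply: ler_sum => w _; apply: pt_bound.
have -> : \sum_w (50 * (P w - Q w) ^+ 2 / Q w + Q w / 200) =
    50 * \sum_w (P w - Q w) ^+ 2 / Q w + (\sum_w Q w) / 200.
  rewrite big_split /= big_distrr big_distrl /=.
  by congr (_ + _); apply: eq_bigr => w _; rewrite mulrA.
rewrite sQ.
have : \sum_w (P w - Q w) ^+ 2 / Q w <= 2 * s by lra.
move: (\sum_w _) => X hX.
lra.
Qed.


Lemma depth_ge0 (R : realType) (t : wtree R) c a : 0 <= c -> weights_ge t c -> 0 <= depth t a.
Proof.
move=> c0; elim: t => [i|wl l IHl wr r IHr] //= [h1 h2 h3 h4].
case: ifP => _; [have := IHl h3 | have := IHr h4]; lra.
Qed.

Lemma dist_pos (R : realType) (t : wtree R) c a b : 0 < c -> weights_ge t c ->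
  a != b -> a \in leaves t -> b \in leaves t -> 0 < dist t a b.
Proof.
move=> c0; elim: t => [i|wl l IHl wr r IHr] /=.
  by move=> _ ab; rewrite !inE => /eqP ha /eqP hb; rewrite ha hb eqxx in ab.
move=> [h1 h2 h3 h4] ab ha hb.
case: ifP => [/andP[ha' hb']|_]; first exact: IHl.
case: ifP => [/andP[ha' hb']|_]; first exact: IHr.
have := depth_ge0 a (ltW c0) h3; have := depth_ge0 a (ltW c0) h4.
have := depth_ge0 b (ltW c0) h3; have := depth_ge0 b (ltW c0) h4.
by case: ifP => _; case: ifP => _; lra.
Qed.

Lemma qprob_sum (R : realType) (t : wtree R) n (x : triple n) :
  let a := nat_of_ord (val x).1.1 in
  let b := nat_of_ord (val x).1.2 in
  let c := nat_of_ord (val x).2 in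
  dist t a b + dist t b c + dist t a c != 0 ->
  \sum_(k < 3) qprob t x k = 1.
Proof.
move=> a b c hS.
rewrite !big_ord_recl big_ord0 /qprob /= -/a -/b -/c.
field; move: hS; apply: contra => /eqP h; apply/eqP; lra.
Qed.

Lemma qprob_pos (R : realType) (t : wtree R) n (x : triple n) k :
  let a := nat_of_ord (val x).1.1 in
  let b := nat_of_ord (val x).1.2 in
  let c := nat_of_ord (val x).2 in
  0 < dist t a b -> 0 < dist t b c -> 0 < dist t a c -> 0 < qprob t x k.
Proof.
move=> a b c h1 h2 h3; rewrite /qprob -/a -/b -/c.
by case: ifP => _; [|case: ifP => _]; apply: divr_gt0; lra.
Qed.


Definition Q3 (R : realType) (A B C : R) (k : 'I_3) : R :=
  let S := A + B + C in
  if val k == 0%N then (C + B) / (2 * S)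
  else if val k == 1%N then (A + C) / (2 * S)
  else (A + B) / (2 * S).

Definition chi3 (R : realType) (A1 B1 C1 A2 B2 C2 : R) : R :=
  \sum_(k < 3) (Q3 A1 B1 C1 k - Q3 A2 B2 C2 k) ^+ 2 / Q3 A2 B2 C2 k.

Lemma chi3E (R : realType) (A1 B1 C1 A2 B2 C2 : R) : chi3 A1 B1 C1 A2 B2 C2 =
  ((C1 + B1) / (2 * (A1 + B1 + C1)) - (C2 + B2) / (2 * (A2 + B2 + C2))) ^+ 2 / ((C2 + B2) / (2 * (A2 + B2 + C2)))
  + ((A1 + C1) / (2 * (A1 + B1 + C1)) - (A2 + C2) / (2 * (A2 + B2 + C2))) ^+ 2 / ((A2 + C2) / (2 * (A2 + B2 + C2)))
  + ((A1 + B1) / (2 * (A1 + B1 + C1)) - (A2 + B2) / (2 * (A2 + B2 + C2))) ^+ 2 / ((A2 + B2) / (2 * (A2 + B2 + C2))).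
Proof. by rewrite /chi3 !big_ord_recl big_ord0 /Q3 /= addr0 addrA. Qed.

Lemma le_c2 (R : realType) (c F : R) : F <= 1 -> c ^+ 2 * F <= c ^+ 2.
Proof. by move=> hF; rewrite -[X in _ <= X]mulr1 ler_wpM2l // sqr_ge0. Qed.

Lemma chiI (R : realType) (c : R) : 0 <= c -> 4 * c <= 1 ->
  chi3 (1 - 2 * c) 2 2 1 2 2 <= c ^+ 2.
Proof.
move=> c0 c4.
have -> : chi3 (1 - 2 * c) 2 2 1 2 2 = c ^+ 2 * (8 / (3 * (5 - 2 * c) ^+ 2)).
  by rewrite chi3E; field; apply/eqP; lra.
apply: le_c2; rewrite ler_pdivrMr ?mul1r; nra.
Qed.

Lemma chiII (R : realType) (c : R) : 0 <= c -> 4 * c <= 1 ->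
  chi3 1 2 2 (1 - 2 * c) 2 2 <= c ^+ 2.
Proof.
move=> c0 c4.
have -> : chi3 1 2 2 (1 - 2 * c) 2 2 = c ^+ 2 * (8 / (25 * (3 - 2 * c))).
  by rewrite chi3E; field; rewrite ?andbT; (try apply/and3P); (try apply/andP); split; apply/eqP; lra.
apply: le_c2; rewrite ler_pdivrMr ?mul1r; nra.
Qed.

Lemma chiIII (R : realType) (c : R) : 0 <= c -> 4 * c <= 1 ->
  chi3 (1 - 2 * c) 1 1 1 1 (1 - 2 * c) <= c ^+ 2.
Proof.
move=> c0 c4.
have -> : chi3 (1 - 2 * c) 1 1 1 1 (1 - 2 * c) = c ^+ 2 * ((2 - c) / ((1 - c) * (3 - 2 * c))).
  by rewrite chi3E; field; rewrite ?andbT; (try apply/and3P); (try apply/andP); split; apply/eqP; lra.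
apply: le_c2; rewrite ler_pdivrMr ?mul1r; nra.
Qed.

Lemma chi3_same (R : realType) (A B C : R) : chi3 A B C A B C = 0.
Proof. by rewrite /chi3 big1 // => k _; rewrite subrr expr0n mul0r. Qed.

Lemma triple_chi (R : realType) (c : R) k n (x : triple n) :
  0 <= c -> 4 * c <= 1 -> (2 <= n - 3 <= 2 ^ k)%N ->
  \sum_(j < 3) (qprob (Tr c k n 1 2) x j - qprob (Tr c k n 2 1) x j) ^+ 2
      / qprob (Tr c k n 2 1) x j
  <= (if ((val x).1.1 == 0%N :> nat) && (nat_of_ord (val x).1.2 \in [:: 1%N; 2%N]) then c ^+ 2 else 0).
Proof.
move=> c0 c4 hk.
set T1 := Tr c k n 1 2; set T2 := Tr c k n 2 1.
have hx := valP x.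
set a := nat_of_ord (val x).1.1 in hx *.
set b := nat_of_ord (val x).1.2 in hx *.
set z := nat_of_ord (val x).2 in hx *.
have zn : (z < n)%N by apply: ltn_ord.
have -> : \sum_(j < 3) (qprob T1 x j - qprob T2 x j) ^+ 2 / qprob T2 x j =
   chi3 (dist T1 a b) (dist T1 b z) (dist T1 a z) (dist T2 a b) (dist T2 b z) (dist T2 a z).
  by [].
case: ifP => [/andP[/eqP a0 hb]|hab].
  rewrite a0; have [d1 d2 d3] := dist_Sp1 c; have [e1 e2 e3] := dist_Sp2 c.
  move: hb; rewrite !inE => /orP[] /eqP b1.
    rewrite b1; case: (leqP 3 z) => z3.
      rewrite /T1 /T2 !(dist_cross _ _ _ _ (u := 0) (z := z)) //.
      rewrite !(dist_cross _ _ _ _ (u := 1) (z := z)) //.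
      rewrite dist_in // ?inE ?eqxx ?orbT // d1.
      rewrite dist_in // ?inE ?eqxx ?orbT // e1.
      exact: chiI.
    have -> : z = 2%N by lia.
    rewrite /T1 /T2 !dist_in // ?inE ?eqxx ?orbT // d1 d2 d3 e1 e2 e3.
    exact: chiIII.
  rewrite b1; have z3 : (3 <= z)%N by lia.
  rewrite /T1 /T2 !(dist_cross _ _ _ _ (u := 0) (z := z)) //.
  rewrite !(dist_cross _ _ _ _ (u := 2) (z := z)) //.
  rewrite dist_in // ?inE ?eqxx ?orbT // d2.
  rewrite dist_in // ?inE ?eqxx ?orbT // e2.
  exact: chiII.
have bn : (b < n)%N by lia.
have an : (a < n)%N by lia.
have s1 : dist T1 a b = dist T2 a b by apply: pairT_eq => //; [lia | rewrite hab].
have s2 : dist T1 b z = dist T2 b z.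
  apply: pairT_eq => //; first lia.
  by apply/negP => /andP[/eqP b0 _]; lia.
have s3 : dist T1 a z = dist T2 a z.
  apply: pairT_eq => //; first lia.
  apply/negP => /andP[/eqP a0 hz]; move: hab; rewrite a0 eqxx /= !inE => hb.
  by move: hz; rewrite !inE => /orP[] /eqP hz; lia.
by rewrite s1 s2 s3 chi3_same.
Qed.


Lemma sq_le_pow k : (k ^ 2 <= 4 * 2 ^ k)%N.
Proof.
elim: k => [|k IH] //.
rewrite [(2 ^ k.+1)%N]expnS.
case: (leqP 3 k) => k3.
  have : (k.+1 ^ 2 <= 2 * k ^ 2)%N by rewrite -!mulnn; nia.
  set P := (2 ^ k)%N in IH *; set K := (k ^ 2)%N in IH *; set K1 := (k.+1 ^ 2)%N; lia.
by case: k IH k3 => [|[|[|k]]].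
Qed.

Lemma count_changed n : (#|[pred x : triple n | ((val x).1.1 == 0%N :> nat) &&
     (nat_of_ord (val x).1.2 \in [:: 1%N; 2%N])]| <= 2 * n)%N.
Proof.
have -> : (2 * n = #|{: bool * 'I_n}|)%N by rewrite card_prod card_bool card_ord.
apply: (@leq_card_in _ _ (fun x : triple n => (nat_of_ord (val x).1.2 == 1%N, (val x).2))).
move=> [[[a1 b1] c1] px] [[[a2 b2] c2] py]; rewrite ?inE /=.
move=> /andP[/eqP ax bx] /andP[/eqP ay by_] [hb hc].
apply: val_inj => /=.
have ea : a1 = a2 by apply: val_inj; rewrite /= ax ay.
have eb : b1 = b2.
  apply: val_inj => /=; move: bx by_ hb.
  by rewrite ?inE => /orP[] /eqP -> /orP[] /eqP ->.
by rewrite ea eb hc.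
Qed.

Lemma triple_dpos (R : realType) (t : wtree R) (c : R) n (x : triple n) :
  0 < c -> weights_ge t c -> perm_eq (leaves t) (iota 0 n) ->
  [/\ 0 < dist t (val x).1.1 (val x).1.2, 0 < dist t (val x).1.2 (val x).2
    & 0 < dist t (val x).1.1 (val x).2].
Proof.
move=> c0 wt pt; have hx := valP x.
have mem : forall i : 'I_n, nat_of_ord i \in leaves t.
  by move=> i; rewrite (perm_mem pt) mem_iota /= add0n ltn_ord.
split; apply: (dist_pos c0 wt) => //; apply/eqP; move: hx => /= hx; lia.
Qed.

Lemma L1_tree (R : realType) (t1 t2 : wtree R) (c : R) n (s : R) :
  0 < c -> weights_ge t1 c -> perm_eq (leaves t1) (iota 0 n) ->
  weights_ge t2 c -> perm_eq (leaves t2) (iota 0 n) ->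
  \sum_(x : triple n) \sum_(j < 3) (qprob t1 x j - qprob t2 x j) ^+ 2 / qprob t2 x j <= s ->
  s <= 2^-1 ->
  \sum_(w : outcome n) `|joint t1 w - joint t2 w| <= 100 * s + 1 / 200
  /\ \sum_(w : outcome n) joint t2 w = 1.
Proof.
move=> c0 w1 p1 w2 p2 hs s2.
have qpos : forall (x : triple n) j, 0 < qprob t2 x j.
  by move=> x j; have [h1 h2 h3] := triple_dpos x c0 w2 p2; apply: qprob_pos.
have sum1 : forall t, weights_ge t c -> perm_eq (leaves t) (iota 0 n) ->
    forall x : triple n, \sum_(j < 3) qprob t x j = 1.
  move=> t wt pt x; have [h1 h2 h3] := triple_dpos x c0 wt pt.
  by apply: qprob_sum; rewrite gt_eqF //; rewrite !addr_gt0.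
split.
  exact: (L1_main (p := fun x j => qprob t1 x j) (q := fun x j => qprob t2 x j) qpos (sum1 _ w1 p1) (sum1 _ w2 p2) hs s2).
rewrite /joint sum_prod (eq_bigr (fun=> 1)) ?big1_eq // => x _.
exact: sum1.
Qed.

Lemma test_bound (R : realType) n (P Q : outcome n -> R) (f : outcome n -> bool) :
  \sum_w Q w = 1 -> (forall w, 0 <= Q w) ->
  \sum_(w | f w == true) P w + \sum_(w | f w == false) Q w <= 1 + \sum_w `|P w - Q w|.
Proof.
move=> sQ Q0.
have hQ : \sum_(w | f w == true) Q w + \sum_(w | f w == false) Q w = 1.
  rewrite -sQ big_mkcond [X in _ + X = _]big_mkcond -big_split /=.
  by apply: eq_bigr => w _; case: (f w); rewrite /= ?addr0 ?add0r.
have hP : \sum_(w | f w == true) P w + \sum_(w | f w == false) `|P w - Q w| >= 0 +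
    \sum_(w | f w == true) P w.
  by rewrite addrC lerD2l; apply: sumr_ge0.
have hA : \sum_(w | f w == true) `|P w - Q w| + \sum_(w | f w == false) `|P w - Q w| = \sum_w `|P w - Q w|.
  rewrite big_mkcond [X in _ + X = _]big_mkcond -big_split /=.
  by apply: eq_bigr => w _; case: (f w); rewrite /= ?addr0 ?add0r.
have hB : \sum_(w | f w == true) (P w - Q w) <= \sum_(w | f w == true) `|P w - Q w|.
  by apply: ler_sum => w _; apply: ler_norm.
have hC : 0 <= \sum_(w | f w == false) `|P w - Q w| by apply: sumr_ge0.
rewrite sumrB in hB.
lra.
Qed.

Unset Implicit Arguments.

Theorem theorem3 (R : realType) :
  exists rho0 : R, 0 < rho0 <= 1 / 100 /\
  forall rho : R, 0 < rho <= rho0 ->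
  exists N : nat, forall n : nat, (N <= n)%N ->
  exists T1 T2 : wtree R,
    [/\ admissible n rho T1, admissible n rho T2, ~ same_topo T1 T2,
        tv n T1 T2 <= 1 / 100
      & forall f : outcome n -> bool,
          2^-1 * (prob_answer T1 f true + prob_answer T2 f false) <= 51 / 100].
Proof.
exists (1 / 200); split; first by apply/andP; split; lra.
move=> rho /andP[r0 r1].
exists 5%N => n n5.
set s := Num.sqrt (n%:R : R).
have s0 : 0 < s by rewrite sqrtr_gt0 ltr0n; lia.
have ss : s ^+ 2 = n%:R by rewrite sqr_sqrtr // ler0n.
have n1 : (5 : R) <= n%:R by rewrite (ler_nat R 5 n).
have s1 : 1 <= s by nra.
set c := rho / s.
have c0 : 0 < c by apply: divr_gt0.
have crho : c <= rho by rewrite ler_pdivrMr //; nra.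
have c4 : 4 * c <= 1 by lra.
set k := (trunc_log 2 n).+1.
have hk0 : (n < 2 ^ k)%N by apply: trunc_log_ltn.
have hk1 : (2 ^ k <= 2 * n)%N.
  by rewrite /k expnS leq_mul2l /=; apply: trunc_logP => //; lia.
have hk : (n - 3 <= 2 ^ k)%N by lia.
have hk2 : (2 <= n - 3 <= 2 ^ k)%N by apply/andP; split; lia.
have kn : (k ^ 2 <= 8 * n)%N.
  have := sq_le_pow k; set P := (2 ^ k)%N in hk1 *; set K := (k ^ 2)%N; lia.
have kc : k%:R * c <= 2^-1.
  have kR : (k%:R : R) ^+ 2 <= 8 * n%:R.
    by rewrite -natrX -(natrM R 8 n) ler_nat.
  have k0 : (0 : R) <= k%:R by apply: ler0n.
  have k3 : (k%:R : R) <= 3 * s by nra.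
  rewrite /c mulrA ler_pdivrMr //; nra.
have [A1 W1 D1] := @Tr_adm R c k n 1 2 n5 hk (ltW c0) c4 kc (perm_refl _).
have [A2 W2 D2] := @Tr_adm R c k n 2 1 n5 hk (ltW c0) c4 kc isT.
set T1 := Tr c k n 1 2; set T2 := Tr c k n 2 1.
have hs : \sum_(x : triple n) \sum_(j < 3) (qprob T1 x j - qprob T2 x j) ^+ 2 / qprob T2 x j
    <= 2 * rho ^+ 2.
  apply: le_trans (ler_sum _ (fun x _ => triple_chi x (ltW c0) c4 hk2)) _.
  rewrite -big_mkcond /= sumr_const.
  apply: le_trans (_ : c ^+ 2 *+ (2 * n) <= _).
    apply: ler_wpMn2l; first exact: sqr_ge0.
    exact: (count_changed n).
  rewrite -mulr_natr natrM /c expr_div_n ss.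
  have nz : (n%:R : R) != 0 by rewrite pnatr_eq0; lia.
  by rewrite le_eqVlt; apply/orP; left; apply/eqP; field.
have s2 : 2 * rho ^+ 2 <= 2^-1 by nra.
have [L sQ] := L1_tree c0 W1 A1 W2 A2 hs s2.
have L' : \sum_(w : outcome n) `|joint T1 w - joint T2 w| <= 1 / 100 by nra.
exists T1, T2; split => //.
- exact: Tr_notsame.
- rewrite /tv; have : 0 <= \sum_(w : outcome n) `|joint T1 w - joint T2 w|.
    by apply: sumr_ge0 => w _.
  lra.
- move=> f; rewrite /prob_answer.
  have Q0 : forall w : outcome n, 0 <= joint T2 w.
    move=> w; rewrite /joint; apply: prodr_ge0 => x _; apply: ltW.
    by have [h1 h2 h3] := triple_dpos x c0 W2 A2; apply: qprob_pos.
  have := @test_bound R n (fun w => joint T1 w) (fun w => joint T2 w) f sQ Q0.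
  lra.
Qed.
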